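(* Let $\mathcal F\subseteq[\mathbb R^p\to\mathbb R^d]$ and let $\Pi_{\mathcal F}=\{\pi_f:f\in\mathcal F\}$ be the induced class of plug-in policies. Then the Natarajan dimension of $\Pi_{\mathcal F}$ is at most the VC-linear-subgraph dimension of $\mathcal F$.
   Context: $\mathcal Z=\{z\in\mathbb R^d:Az\le b\}$ is a bounded polytope with finite set of extreme points $\mathcal Z^\angle$. For $f:\mathbb R^p\to\mathbb R^d$, the plug-in policy $\pi_f$ is defined by $\pi_f(x)\in\arg\min_{z\in\mathcal Z}f(x)^\top z$, where $\pi_f(x)$ is always chosen in $\mathcal Z^\angle$, with ties broken by a fixed ordering of $\mathcal Z^\angle$ (the same ordering for all $f$ and $x$). The VC-linear-subgraph dimension of $\mathcal F$ is the largest integer $\nu$ for which there exist $x_1,\dots,x_\nu\in\mathbb R^p$, $\beta_1,\dots,\beta_\nu\in\mathbb R^d$, $t_1,\dots,t_\nu\in\mathbb R$ such that $\{(\mathbb I\{\beta_1^\top f(x_1)\le t_1\},\dots,\mathbb I\{\beta_\nu^\top f(x_\nu)\le t_\nu\}):f\in\mathcal F\}=\{0,1\}^\nu$. The Natarajan dimension of a class $\mathcal G\subseteq[\mathbb R^p\to\mathcal S]$ is the largest integer $\eta$ for which there exist $x_1,\dots,x_\eta\in\mathbb R^p$ and $s_1\neq s_1',\dots,s_\eta\neq s_\eta'\in\mathcal S$ such that $\{(\mathbb I\{g(x_1)=s_1\},\dots,\mathbb I\{g(x_\eta)=s_\eta\}):g\in\mathcal G,\ g(x_k)\in\{s_k,s_k'\}\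 \forall k\}=\{0,1\}^\eta$. *)

(* Defs.v *)
From HB Require Import structures.
From mathcomp Require Import all_boot all_order all_algebra.
From mathcomp Require Import boolp reals.
Set Implicit Arguments. Unset Strict Implicit. Unset Printing Implicit Defensive.
Import Order.TTheory GRing.Theory Num.Theory.
Local Open Scope ring_scope.

Section Defs.
Variable R : realType.

Definition dotv (n : nat) (u v : 'cV[R]_n) : R := \sum_(i < n) u i 0 * v i 0.

Definition in_poly (m d : nat) (A : 'M[R]_(m, d)) (b : 'cV[R]_m) (z : 'cV[R]_d) : Prop :=
  forall i : 'I_m, (A *m z) i 0 <= b i 0.

Definition bounded_poly (m d : nat) (A : 'M[R]_(m, d)) (b : 'cV[R]_m) : Prop :=
  exists M : R, forall z, in_poly A b z -> forall i : 'I_d, `|z i 0| <= M.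

Definition extreme_point (m d : nat) (A : 'M[R]_(m, d)) (b : 'cV[R]_m) (z : 'cV[R]_d) : Prop :=
  in_poly A b z /\
  forall (y w : 'cV[R]_d) (lam : R), in_poly A b y -> in_poly A b w ->
    0 < lam < 1 -> z = lam *: y + (1 - lam) *: w -> y = w.

Definition is_argmin (m d : nat) (A : 'M[R]_(m, d)) (b : 'cV[R]_m) (c v : 'cV[R]_d) : Prop :=
  in_poly A b v /\ forall z, in_poly A b z -> dotv c v <= dotv c z.

(* plug-in policy pi_f: the first element (in the fixed ordering given by the
   list ext of extreme points) lying in argmin_{z in Z} f(x)^T z *)
Definition plugin_policy (p m d : nat) (A : 'M[R]_(m, d)) (b : 'cV[R]_m)
  (ext : seq 'cV[R]_d) (f : 'cV[R]_p -> 'cV[R]_d) (x : 'cV[R]_p) : 'cV[R]_d :=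
  nth 0 ext (find (fun v => `[< is_argmin A b (f x) v >]) ext).

Definition plugin_class (p m d : nat) (A : 'M[R]_(m, d)) (b : 'cV[R]_m)
  (ext : seq 'cV[R]_d) (F : ('cV[R]_p -> 'cV[R]_d) -> Prop)
  : ('cV[R]_p -> 'cV[R]_d) -> Prop :=
  fun g => exists f, F f /\ g = plugin_policy A b ext f.

Definition vc_linear_subgraph_shatters (p d : nat)
  (F : ('cV[R]_p -> 'cV[R]_d) -> Prop) (nu : nat) : Prop :=
  exists (xs : 'I_nu -> 'cV[R]_p) (betas : 'I_nu -> 'cV[R]_d) (ts : 'I_nu -> R),
    forall pat : 'I_nu -> bool,
      exists f, F f /\ forall k, (dotv (betas k) (f (xs k)) <= ts k) = pat k.
End Defs.

Definition natarajan_shatters (X S : Type) (G : (X -> S) -> Prop) (eta : nat) : Prop :=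
  exists (xs : 'I_eta -> X) (s s' : 'I_eta -> S),
    (forall k, s k <> s' k) /\
    forall pat : 'I_eta -> bool,
      exists g, G g /\ forall k, (g (xs k) = s k \/ g (xs k) = s' k) /\
                               (g (xs k) = s k <-> pat k = true).

(* Main.v *)
Require Import Defs.
From HB Require Import structures.
From mathcomp Require Import all_boot all_order all_algebra.
From mathcomp Require Import boolp reals.
From mathcomp Require Import ring lra.
Set Implicit Arguments. Unset Strict Implicit. Unset Printing Implicit Defensive.
Import Order.TTheory GRing.Theory Num.Theory.
Local Open Scope ring_scope.

Section LP.
Variable R : realType.

Lemma seq_min (T : eqType) (s : seq T) (F : T -> R) (x0 : T) :
  x0 \in s -> exists2 i, i \in s & forall j, j \in s -> F i <= F j.
Proof.
elim: s x0 => [//|a s IH] x0 _.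
case: (pselect (exists x, x \in s)) => [[x xs]|ns].
  have [i iS Hi] := IH x xs.
  have [le|lt] := leP (F a) (F i).
    exists a; first exact: mem_head.
    move=> j; rewrite in_cons => /orP[/eqP->//|/Hi]; exact: le_trans.
  exists i; first by rewrite in_cons iS orbT.
  move=> j; rewrite in_cons => /orP[/eqP->|/Hi//]; exact: ltW.
exists a; first exact: mem_head.
move=> j; rewrite in_cons => /orP[/eqP->//|js]; exfalso; apply: ns; by exists j.
Qed.

Lemma dotvC n (u v : 'cV[R]_n) : dotv u v = dotv v u.
Proof. by apply: eq_bigr => i _; rewrite mulrC. Qed.

Lemma dotv_lin n (c z u : 'cV[R]_n) t : dotv c (z + t *: u) = dotv c z + t * dotv c u.
Proof.
rewrite /dotv mulr_sumr -big_split; apply: eq_bigr => i _; rewrite !mxE /=; ring.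
Qed.

Lemma dotvBl n (a c v : 'cV[R]_n) : dotv (a - c) v = dotv a v - dotv c v.
Proof.
rewrite /dotv -sumrB; apply: eq_bigr => i _; rewrite !mxE /=; ring.
Qed.

Lemma dotvN n (c u : 'cV[R]_n) : dotv c (- u) = - dotv c u.
Proof. rewrite /dotv -sumrN; apply: eq_bigr => i _; rewrite !mxE /=; ring. Qed.

Variables (m d : nat) (A : 'M[R]_(m, d)) (b : 'cV[R]_m).

Lemma Alin (z u : 'cV[R]_d) t i : (A *m (z + t *: u)) i 0 = (A *m z) i 0 + t * (A *m u) i 0.
Proof. by rewrite mulmxDr -scalemxAr !mxE. Qed.

Lemma Alin2 (y w : 'cV[R]_d) l1 l2 i : (A *m (l1 *: y + l2 *: w)) i 0 = l1 * (A *m y) i 0 + l2 * (A *m w) i 0.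
Proof. by rewrite mulmxDr -!scalemxAr !mxE. Qed.

Lemma AlinB (y w : 'cV[R]_d) i : (A *m (y - w)) i 0 = (A *m y) i 0 - (A *m w) i 0.
Proof. by rewrite mulmxBr !mxE. Qed.

Lemma AlinN (y : 'cV[R]_d) i : (A *m (- y)) i 0 = - (A *m y) i 0.
Proof. by rewrite mulmxN !mxE. Qed.

Definition act (z : 'cV[R]_d) := [set i : 'I_m | (A *m z) i 0 == b i 0].

Lemma step (c z : 'cV[R]_d) : bounded_poly A b -> in_poly A b z -> ~ extreme_point A b z ->
  exists z', [/\ in_poly A b z', dotv c z' <= dotv c z & (#|~: act z'| < #|~: act z|)%N].
Proof.
move=> [M HM] Hz Hne.
have [y [w [lam [Hy [Hw [Hl [Hzc Hyw]]]]]]] :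
  exists y w lam, in_poly A b y /\ in_poly A b w /\ 0 < lam < 1 /\
     z = lam *: y + (1 - lam) *: w /\ y <> w.
  apply: contrapT => Hn; apply: Hne; split => // y w lam Hy Hw Hl Hzc.
  case: (pselect (y = w)) => // Hyw; exfalso; apply: Hn.
  by exists y, w, lam.
have /andP[l0 l1] := Hl.
have actu : forall i, i \in act z -> (A *m (y - w)) i 0 = 0.
  move=> i; rewrite inE => /eqP Hi.
  have Hi' : lam * ((A *m y) i 0 - b i 0) + (1 - lam) * ((A *m w) i 0 - b i 0) = 0.
    move: Hi; rewrite Hzc Alin2 => Hi.
    rewrite -Hi; ring.
  have p0 : lam * ((A *m y) i 0 - b i 0) <= 0.
    by apply: mulr_ge0_le0; [exact: ltW|rewrite subr_le0; exact: Hy].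
  have q0 : (1 - lam) * ((A *m w) i 0 - b i 0) <= 0.
    by apply: mulr_ge0_le0; [rewrite subr_ge0; exact: ltW|rewrite subr_le0; exact: Hw].
  have e1 : lam * ((A *m y) i 0 - b i 0) = 0 by lra.
  have e2 : (1 - lam) * ((A *m w) i 0 - b i 0) = 0 by lra.
  move: e1 e2 => /eqP; rewrite mulf_eq0 (gt_eqF l0) /= subr_eq0 => /eqP e1.
  move=> /eqP; rewrite mulf_eq0 subr_eq0 (gt_eqF l1) /= subr_eq0 => /eqP e2.
  by rewrite AlinB e1 e2 subrr.
have [u [u0 [cu au]]] : exists u : 'cV[R]_d, u <> 0 /\ dotv c u <= 0 /\
    forall i, i \in act z -> (A *m u) i 0 = 0.
  have yw0 : y - w <> 0 by move=> /eqP; rewrite subr_eq0 => /eqP.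
  have [le|lt] := leP (dotv c (y - w)) 0.
    by exists (y - w).
  exists (- (y - w)); split; first by move=> /eqP; rewrite oppr_eq0 => /eqP.
  split; last by move=> i /actu; rewrite AlinN => ->; rewrite oppr0.
  rewrite dotvN; lra.
have [i0 Hi0] : exists i, 0 < (A *m u) i 0.
  apply: contrapT => Hn.
  have Hneg : forall i, (A *m u) i 0 <= 0.
    by move=> i; rewrite leNgt; apply/negP => H; apply: Hn; exists i.
  have [j uj] : exists j, u j 0 != 0.
    apply: contrapT => Hj; apply: u0; apply/matrixP => i k; rewrite (ord1 k) mxE.
    by apply/eqP; apply: contrapT => H; apply: Hj; exists i; apply/negP.
  have uj0 : 0 < `|u j 0| by rewrite normr_gt0.
  set t := (M + `|z j 0| + 1) / `|u j 0|.
  have M0 : 0 <= M by apply: le_trans (HM z Hz j); exact: normr_ge0.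
  have t0 : 0 <= t by apply: divr_ge0 => //; apply: addr_ge0; [apply: addr_ge0|]; rewrite ?normr_ge0.
  have Hin : in_poly A b (z + t *: u).
    move=> i; rewrite Alin; have := Hz i; have := Hneg i.
    move=> h1 h2; have : t * (A *m u) i 0 <= 0 by exact: mulr_ge0_le0.
    lra.
  have := HM _ Hin j; rewrite !mxE.
  have e : `|t * u j 0| = M + `|z j 0| + 1.
    by rewrite normrM (ger0_norm t0) /t divfK // gt_eqF.
  have := ler_normB (t * u j 0 + z j 0) (z j 0).
  rewrite addrK e addrC; lra.
pose S := [seq i <- enum 'I_m | 0 < (A *m u) i 0].
have i0S : i0 \in S by rewrite mem_filter Hi0 mem_enum.
pose ratio i := (b i 0 - (A *m z) i 0) / (A *m u) i 0.
have [ik isS Hmin] := seq_min ratio i0S.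
move: isS; rewrite mem_filter => /andP[isp _].
set ts := ratio ik.
have ts0 : 0 <= ts by apply: divr_ge0; [rewrite subr_ge0; exact: Hz|exact: ltW].
exists (z + ts *: u); split.
- move=> i; rewrite Alin.
  have [le|lt] := leP ((A *m u) i 0) 0.
    have := Hz i; have : ts * (A *m u) i 0 <= 0 by exact: mulr_ge0_le0.
    lra.
  have : ts <= ratio i by apply: Hmin; rewrite mem_filter lt mem_enum.
  move=> /(ler_wpM2r (ltW lt)); rewrite /ratio divfK ?gt_eqF //; lra.
- rewrite dotv_lin; have : ts * dotv c u <= 0 by exact: mulr_ge0_le0.
  lra.
- apply: proper_card; apply/properP; split.
    apply/subsetP => i; rewrite !inE; apply: contra => /eqP H.
    by rewrite Alin au ?mulr0 ?addr0 ?H // inE H.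
  exists ik; rewrite !inE.
    apply/negP => /eqP H; have := au ik; rewrite inE H eqxx => /(_ isT) H2.
    by move: isp; rewrite H2 ltxx.
  rewrite negbK Alin /ts /ratio divfK; last by rewrite gt_eqF.
  apply/eqP; ring.
Qed.

Lemma reach (c : 'cV[R]_d) : bounded_poly A b -> forall n z, (#|~: act z| <= n)%N ->
  in_poly A b z -> exists v, extreme_point A b v /\ dotv c v <= dotv c z.
Proof.
move=> Hb; elim=> [|n IH] z Hn Hz.
  case: (pselect (extreme_point A b z)) => [He|He]; first by exists z.
  have [z' [_ _]] := step c Hb Hz He.
  by rewrite leqn0 in Hn; rewrite (eqP Hn).
case: (pselect (extreme_point A b z)) => [He|He]; first by exists z.
have [z' [Hz' cz lt]] := step c Hb Hz He.
have [v [Hv cv]] := IH z' (leq_trans lt Hn) Hz'.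
exists v; split => //; exact: le_trans cz.
Qed.

Lemma argmin_ext (ext : seq 'cV[R]_d) (c z0 : 'cV[R]_d) : bounded_poly A b ->
  (forall v, v \in ext <-> extreme_point A b v) -> in_poly A b z0 ->
  has (fun v => `[< is_argmin A b c v >]) ext.
Proof.
move=> Hb Hext Hz0.
have [v0 [Hv0 _]] := reach c Hb (leqnn _) Hz0.
have v0e : v0 \in ext by apply/Hext.
have [vs vse Hmin] := seq_min (dotv c) v0e.
apply/hasP; exists vs => //; apply/asboolP; split.
  by have [] := (proj1 (Hext vs) vse).
move=> z Hz; have [v [Hv cv]] := reach c Hb (leqnn _) Hz.
apply: le_trans cv; apply: Hmin; exact/Hext.
Qed.
End LP.

Section Main.
Variables (R : realType) (p d m : nat) (A : 'M[R]_(m, d)) (b : 'cV[R]_m)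
  (ext : seq 'cV[R]_d).
Hypothesis Hu : uniq ext.
Hypothesis Hext : forall v, v \in ext <-> extreme_point A b v.
Hypothesis Hhas : forall c, has (fun v => `[< is_argmin A b c v >]) ext.

Lemma pol_mem (f : 'cV[R]_p -> 'cV[R]_d) x : plugin_policy A b ext f x \in ext.
Proof. by apply: mem_nth; rewrite -has_find. Qed.

Lemma pol_argmin (f : 'cV[R]_p -> 'cV[R]_d) x : is_argmin A b (f x) (plugin_policy A b ext f x).
Proof. apply/(asboolP (is_argmin A b (f x) _)); rewrite /plugin_policy; exact: (nth_find 0 (Hhas (f x))). Qed.

Lemma pol_first (f : 'cV[R]_p -> 'cV[R]_d) x v : v \in ext ->
  (index v ext < index (plugin_policy A b ext f x) ext)%N -> ~ is_argmin A b (f x) v.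
Proof.
move=> ve; rewrite /plugin_policy index_uniq -?has_find // => lt.
have := before_find 0 lt; rewrite nth_index // => /negbT /asboolPn //.
Qed.

Lemma key (f : 'cV[R]_p -> 'cV[R]_d) x a c : a \in ext -> c \in ext ->
  (index a ext < index c ext)%N ->
  plugin_policy A b ext f x = a \/ plugin_policy A b ext f x = c ->
  (dotv (a - c) (f x) <= 0) = (plugin_policy A b ext f x == a).
Proof.
move=> ae ce lt [E|E].
  rewrite E eqxx; apply/idP; rewrite dotvBl subr_le0 dotvC [dotv c _]dotvC.
  have [_ H] := pol_argmin f x; rewrite E in H; apply: H.
  by have [] := proj1 (Hext c) ce.
have ac : a != c by apply/eqP => ac; rewrite ac ltnn in lt.
rewrite E eq_sym (negbTE ac); apply/negbTE; rewrite -ltNge.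
have na : ~ is_argmin A b (f x) a by apply: (pol_first (f:=f) (x:=x) ae); rewrite E.
have aZ : in_poly A b a by have [] := proj1 (Hext a) ae.
have [z [Hz Hlt]] : exists z, in_poly A b z /\ dotv (f x) z < dotv (f x) a.
  apply: contrapT => Hn; apply: na; split => // z Hz; rewrite leNgt; apply/negP => H.
  by apply: Hn; exists z.
have [_ Hc] := pol_argmin f x; rewrite E in Hc; have H := Hc z Hz.
rewrite dotvBl subr_gt0 (dotvC a) (dotvC c); exact: le_lt_trans H Hlt.
Qed.
End Main.

Theorem theorem2 (R : realType) (p d m : nat) (A : 'M[R]_(m, d)) (b : 'cV[R]_m)
  (ext : seq 'cV[R]_d) (F : ('cV[R]_p -> 'cV[R]_d) -> Prop) :
  bounded_poly A b ->
  uniq ext ->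
  (forall v, v \in ext <-> extreme_point A b v) ->
  forall eta : nat, natarajan_shatters (plugin_class A b ext F) eta ->
  exists nu : nat, (eta <= nu)%N /\ vc_linear_subgraph_shatters F nu.
Proof.
move=> Hb Hu Hext eta [xs [s [s' [Hne Hpat]]]].
case: (pselect (exists z, in_poly A b z)) => [[z0 Hz0]|Hemp].
  have Hhas : forall c, has (fun v => `[< is_argmin A b c v >]) ext.
    by move=> c; exact: (argmin_ext c Hb Hext Hz0).
  have sext : forall k, s k \in ext.
    move=> k; have [g [[f [Ff Eg]] Hg]] := Hpat (fun _ => true).
    have := proj2 (proj2 (Hg k)) erefl; rewrite Eg => <-; exact: pol_mem.
  have s'ext : forall k, s' k \in ext.
    move=> k; have [g [[f [Ff Eg]] Hg]] := Hpat (fun _ => false).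
    have [[E|E] H] := Hg k; first by have := proj1 H E.
    by move: E; rewrite Eg => <-; exact: pol_mem.
  have ineq : forall k, index (s k) ext != index (s' k) ext.
    move=> k; apply/eqP => E; apply: (Hne k).
    by rewrite -(nth_index 0 (sext k)) E nth_index.
  pose flip k := (index (s k) ext < index (s' k) ext)%N.
  pose a k := if flip k then s k else s' k.
  pose c k := if flip k then s' k else s k.
  exists eta; split => //.
  exists xs, (fun k => a k - c k), (fun _ => 0) => pat.
  have [g [[f [Ff Eg]] Hg]] := Hpat (fun k => if flip k then pat k else ~~ pat k).
  exists f; split => // k.
  have [Hor Hiff] := Hg k; rewrite Eg in Hor Hiff.
  rewrite (key Hu Hext Hhas).
  - rewrite /a; case fk: (flip k) in Hiff *.
      by apply/eqP/idP => [/Hiff|H]; [|apply/Hiff].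
    case: Hor => E.
      have := proj1 Hiff E; rewrite E; case: (pat k) => // _.
      by apply/negbTE/eqP; exact: Hne.
    rewrite E eqxx; case pk: (pat k) => //; exfalso.
    have := proj2 Hiff; rewrite pk E => /(_ erefl) /esym; exact: Hne.
  - by rewrite /a; case: (flip k).
  - by rewrite /c; case: (flip k).
  - rewrite /a /c /flip; case: ifP => // /negbT; rewrite -leqNgt leq_eqVlt eq_sym.
    by rewrite (negbTE (ineq k)).
  - by rewrite /a /c; case: (flip k); case: Hor; auto.
have Eext : ext = [::].
  case: ext Hext Hu Hpat => [//|v e] He _ _; exfalso; apply: Hemp; exists v.
  by have [] := proj1 (He v) (mem_head _ _).
subst ext.
case: eta xs s s' Hne Hpat => [|n] xs s s' Hne Hpat.
  exists 0%N; split => //.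
  have [g [[f [Ff _]] _]] := Hpat (fun _ => true).
  exists xs, (fun _ => 0), (fun _ => 0) => pat; exists f; split => //; by case.
exfalso; apply: (Hne ord0).
have [g [[f [Ff Eg]] Hg]] := Hpat (fun _ => true).
have [g' [[f' [Ff' Eg']] Hg']] := Hpat (fun _ => false).
have := proj2 (proj2 (Hg ord0)) erefl; rewrite Eg /plugin_policy nth_nil => <-.
have [[E|E] H] := Hg' ord0; first by have := proj1 H E.
by move: E; rewrite Eg' /plugin_policy nth_nil.
Qed.
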